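(* Let $q\in\mathbb{N}$, $p=4q$, and let $S=\{0,1,\ldots,p-1\}$. For $m,n\in S$ define $$g_p(m,n)=\mathbf{d}_{2q}\!\left(0,\ m+n\cdot(-1)^{\mathbf{d}_2(0,\frac{m}{2q})}+q\,\mathbf{d}_2\!\left(0,\tfrac{m}{2q}\right)\mathbf{d}_2\!\left(0,\tfrac{n}{2q}\right)\right)+2q\,\mathbf{d}_2\!\left(0,\ \mathbf{d}_2\!\left(0,\tfrac{m}{2q}\right)+\mathbf{d}_2\!\left(0,\tfrac{n}{2q}\right)\right).$$ Then $S$ under $g_p$ is a group isomorphic to the dicyclic group $Q_{4q}=\langle a,x\mid a^{2q}=1,\ x^2=a^q,\ xax^{-1}=a^{-1}\rangle$ of order $4q$ (nonabelian for $q\ge 2$).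
   Context: For an integer $p\ge 2$, an integer $k\ge 0$ and a real number $x$ (possibly negative), the digit function is $\mathbf{d}_p(k,x)=\lfloor x/p^k\rfloor-p\lfloor x/p^{k+1}\rfloor$. In particular $\mathbf{d}_{r}(0,y)$ for an integer $y$ is the residue of $y$ modulo $r$ in $\{0,\ldots,r-1\}$. *)

(* Defs.v *)
From mathcomp Require Import all_boot all_order all_algebra all_fingroup.
Set Implicit Arguments. Unset Strict Implicit. Unset Printing Implicit Defensive.
Import Order.TTheory GRing.Theory Num.Theory.
Local Open Scope ring_scope.

(* digit function d_p(k,x) = floor(x/p^k) - p*floor(x/p^(k+1)); all arguments
   occurring in the statement are rational, so x ranges over rat. *)
Definition digit (p k : nat) (x : rat) : int :=
  Num.floor (x / (p ^ k)%:R) - (p%:Z) * Num.floor (x / (p ^ k.+1)%:R).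

Definition inS (q : nat) (m : int) : Prop := 0 <= m < (4 * q)%:Z.

Definition gp (q : nat) (m n : int) : int :=
  let dm := digit 2 0 (m%:~R / (2 * q)%:R) in
  let dn := digit 2 0 (n%:~R / (2 * q)%:R) in
  digit (2 * q) 0 (m%:~R + n%:~R * (-1) ^ dm + (q%:R) * dm%:~R * dn%:~R)
  + (2 * q)%:Z * digit 2 0 ((dm + dn)%:~R).

(* Main.v *)
Require Import Defs.
From mathcomp Require Import all_boot all_order all_algebra all_fingroup.
From mathcomp Require Import zify ring lra.
Import Order.TTheory GRing.Theory Num.Theory.
Set Implicit Arguments. Unset Strict Implicit. Unset Printing Implicit Defensive.
Local Open Scope ring_scope.

Lemma digit0 (p : nat) (x : rat) :
  digit p 0 x = Num.floor x - p%:Z * Num.floor (x / p%:R).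
Proof. by rewrite /digit expn0 expn1 divr1. Qed.

Lemma floor_frac (m k : int) (p : nat) : (0 < p)%N ->
  k * p%:Z <= m < (k + 1) * p%:Z -> Num.floor (m%:~R / p%:R : rat) = k.
Proof.
move=> p0 /andP[h1 h2]; apply: floor_def.
have pr : (0 : rat) < p%:R by rewrite ltr0n.
rewrite ler_pdivlMr // ltr_pdivrMr //.
have -> : (p%:R : rat) = (p%:Z)%:~R by [].
by rewrite -!intrM ler_int ltr_int h1 h2.
Qed.

Lemma digit_int (p : nat) (z : int) : (0 < p)%N ->
  digit p 0 z%:~R = (z %% p)%Z.
Proof.
move=> p0; rewrite digit0 intrKfloor (@floor_frac z (z %/ p)%Z p) //.
  rewrite {1}(divz_eq z p); ring.
have h0 : 0 <= (z %% p)%Z by apply: modz_ge0; rewrite eqz_nat -lt0n.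
have h1 : (z %% p)%Z < p by apply: ltz_pmod; rewrite ltz_nat.
rewrite {2 3}(divz_eq z p); apply/andP; split; lia.
Qed.

Lemma floor_div (z : int) (p : nat) : (0 < p)%N ->
  Num.floor (z%:~R / p%:R : rat) = (z %/ p)%Z.
Proof.
move=> p0; apply: floor_frac => //.
have h0 : 0 <= (z %% p)%Z by apply: modz_ge0; rewrite eqz_nat -lt0n.
have h1 : (z %% p)%Z < p by apply: ltz_pmod; rewrite ltz_nat.
rewrite {2 3}(divz_eq z p); apply/andP; split; lia.
Qed.

Lemma dig_half q m : (0 < q)%N -> inS q m ->
  digit 2 0 (m%:~R / (2 * q)%N%:R) = (m %/ (2 * q)%N)%Z.
Proof.
move=> q0 /andP[m0 m1]; rewrite digit0 floor_div ?muln_gt0 //.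
rewrite -mulrA -invfM -natrM floor_div ?muln_gt0 //.
rewrite (@divz_small m (2 * q * 2)%N); first by rewrite mulr0 subr0.
apply/andP; split=> //; rewrite /absz; lia.
by rewrite q0.
Qed.

Lemma half_cases q m : (0 < q)%N -> inS q m ->
  ((m %/ (2 * q)%N)%Z = 0 /\ 0 <= m < (2*q)%N%:Z) \/
  ((m %/ (2 * q)%N)%Z = 1 /\ (2*q)%N%:Z <= m < (4*q)%N%:Z).
Proof.
move=> q0 /andP[m0 m1].
case: (ltP m (2*q)%N%:Z) => h.
  left; split; last by apply/andP.
  apply: divz_small; rewrite m0 /=; lia.
right; split; last by apply/andP; split; lia.
have -> : m = 1 * (2*q)%N%:Z + (m - (2*q)%N%:Z) by ring.
rewrite divzMDl; last by rewrite eqz_nat; lia.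
rewrite divz_small //; apply/andP; split; rewrite /absz; lia.
Qed.

Lemma gpE q m n : (0 < q)%N -> inS q m -> inS q n ->
  gp q m n =
  ((m + (if (m %/ (2*q)%N)%Z == 0 then n else - n)
      + (if ((m %/ (2*q)%N)%Z == 1) && ((n %/ (2*q)%N)%Z == 1) then q%:Z else 0))
     %% (2*q)%N)%Z
  + (2*q)%N%:Z * (((m %/ (2*q)%N)%Z + (n %/ (2*q)%N)%Z) %% 2)%Z.
Proof.
move=> q0 Sm Sn; rewrite /gp !dig_half //.
have Q0 : (0 < 2 * q)%N by rewrite muln_gt0.
case: (half_cases q0 Sm) => [[-> _]|[-> _]];
case: (half_cases q0 Sn) => [[-> _]|[-> _]] /=.
all: rewrite ?expr0z ?expr1z (@digit_int 2) //.
all: match goal with |- digit _ _ ?X + _ = ((?E %% _)%Z) + _ =>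
  have -> : X = E%:~R by rewrite ?rmorphD ?rmorphN ?rmorph0 ?rmorph1 /= ?mulr0 ?mul0r ?mulr1 ?mulrN1 ?addr0 end.
all: by rewrite digit_int.
Qed.

Definition powz (gT : finGroupType) (Q : nat) (a : gT) (z : int) : gT :=
  (a ^+ `|(z %% Q)%Z|%N)%g.

Lemma powz_nat (gT : finGroupType) (Q : nat) (a : gT) (k : nat) :
  (a ^+ Q = 1)%g -> powz Q a k = (a ^+ k)%g.
Proof. by move=> ha; rewrite /powz modz_nat absz_nat expg_mod. Qed.

Lemma powz_mod (gT : finGroupType) (Q : nat) (a : gT) (z : int) :
  powz Q a (z %% Q)%Z = powz Q a z.
Proof. by rewrite /powz modz_mod. Qed.

Lemma powzD (gT : finGroupType) (Q : nat) (a : gT) (y z : int) :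
  (0 < Q)%N -> (a ^+ Q = 1)%g -> powz Q a (y + z) = (powz Q a y * powz Q a z)%g.
Proof.
move=> Q0 ha.
have Qn : (Q%:Z != 0) by rewrite eqz_nat -lt0n.
have E w : powz Q a w = powz Q a (w %% Q)%Z by rewrite powz_mod.
rewrite (E (y+z)) (E y) (E z) -modzDm.
have [u ->] : exists u : nat, (y %% Q)%Z = u.
  by exists `|(y %% Q)%Z|%N; rewrite gez0_abs // modz_ge0.
have [v ->] : exists v : nat, (z %% Q)%Z = v.
  by exists `|(z %% Q)%Z|%N; rewrite gez0_abs // modz_ge0.
by rewrite -PoszD powz_mod !powz_nat // expgD.
Qed.

Lemma powzN (gT : finGroupType) (Q : nat) (a : gT) (z : int) :
  (0 < Q)%N -> (a ^+ Q = 1)%g -> powz Q a (- z) = (powz Q a z)^-1%g.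
Proof.
move=> Q0 ha; apply/eqP; rewrite eq_mulgV1 invgK -powzD // addNr.
by rewrite (@powz_nat _ _ _ 0) // expg0.
Qed.

Lemma powzMQ (gT : finGroupType) (Q : nat) (a : gT) (w z : int) :
  (0 < Q)%N -> (a ^+ Q = 1)%g -> powz Q a (z + Q%:Z * w) = powz Q a z.
Proof.
move=> Q0 ha; rewrite powzD // /powz (mulrC (Q%:Z)) modzMl /= expg0 mulg1 //.
Qed.

Lemma x_powz (gT : finGroupType) (Q : nat) (a x : gT) (z : int) :
  (0 < Q)%N -> (a ^+ Q = 1)%g -> (x * a * x^-1 = a^-1)%g ->
  (x * powz Q a z = powz Q a (- z) * x)%g.
Proof.
move=> Q0 ha hxa.
have hc : (a ^ x^-1 = a^-1)%g by rewrite /conjg invgK mulgA.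
rewrite powzN // {2}/powz; set k := `|_|%N.
have : ((a ^+ k) ^ x^-1 = (a ^+ k)^-1)%g by rewrite conjXg hc expgVn.
by rewrite /conjg invgK mulgA => <-; rewrite mulgKV.
Qed.

Definition psi (gT : finGroupType) (q : nat) (a x : gT) (m : int) : gT :=
  (powz (2 * q) a m * x ^+ `|(m %/ (2 * q)%N)%Z|%N)%g.

Lemma psiM (gT : finGroupType) (q : nat) (a x : gT) (m n : int) :
  (0 < q)%N -> (a ^+ (2 * q) = 1)%g -> (x ^+ 2 = a ^+ q)%g ->
  (x * a * x^-1 = a^-1)%g -> inS q m -> inS q n ->
  psi q a x (gp q m n) = (psi q a x m * psi q a x n)%g.
Proof.
move=> q0 ha hx2 hxa Sm Sn.
have Q0 : (0 < 2 * q)%N by rewrite muln_gt0.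
have Qn : ((2 * q)%N%:Z != 0) by rewrite eqz_nat -lt0n.
rewrite gpE // /psi.
set E := (_ + _ + _)%R; set s := (_ %% 2)%Z.
have r0 : (0 <= E %% (2*q)%N)%Z by apply: modz_ge0.
have r1 : (E %% (2*q)%N < (2*q)%N)%Z by apply: ltz_pmod; rewrite ltz_nat.
rewrite powzMQ // powz_mod.
rewrite addrC mulrC divzMDl // (@divz_small (E %% (2*q)%N)%Z); last first.
  by rewrite r0 /=; lia.
clear r0 r1; rewrite addr0 {}/s {}/E.
case: (half_cases q0 Sm) => [[-> _]|[-> _]];
case: (half_cases q0 Sn) => [[-> _]|[-> _]] /=.
- by rewrite addr0 !expg0 !mulg1 powzD.
- by rewrite addr0 expg0 mulg1 expg1 powzD // mulgA.
- by rewrite addr0 !expg0 !mulg1 !expg1 -mulgA x_powz // mulgA -powzD.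
- have -> : (1 + 1 - (0 * ((1 + 1) %/ (1 + 1)) * (1 + 1)).+2)%N = 0%N by [].
  rewrite expg0 mulg1 !expg1 mulgA -(mulgA _ x) x_powz // !mulgA -powzD //.
  have -> : (powz (2 * q) a (m - n) * x * x = powz (2 * q) a (m - n) * x ^+ 2)%g by rewrite expgS expg1 mulgA.
  by rewrite hx2 -(@powz_nat _ (2 * q)) // -powzD.
Qed.

Lemma gp_inS q m n : (0 < q)%N -> inS q m -> inS q n -> inS q (gp q m n).
Proof.
move=> q0 Sm Sn; rewrite gpE //.
set E := (_ + _ + _)%R; set s := ((_ + _) %% 2)%Z.
have Qn : ((2 * q)%N%:Z != 0) by rewrite eqz_nat -lt0n muln_gt0 q0.
have r0 : (0 <= E %% (2*q)%N)%Z by apply: modz_ge0.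
have r1 : (E %% (2*q)%N < (2*q)%N)%Z by apply: ltz_pmod; rewrite ltz_nat muln_gt0 q0.
have s0 : (0 <= s)%Z by apply: modz_ge0.
have s1 : (s < 2)%Z by apply: ltz_pmod.
rewrite /inS; apply/andP; split; nia.
Qed.

Lemma psi0 (gT : finGroupType) q (a x : gT) : (0 < q)%N -> (a ^+ (2*q) = 1)%g ->
  psi q a x 0 = 1%g.
Proof.
by move=> q0 ha; rewrite /psi div0z (@powz_nat _ _ _ 0) // !expg0 mulg1.
Qed.

Lemma psi1 (gT : finGroupType) q (a x : gT) : (0 < q)%N -> (a ^+ (2*q) = 1)%g ->
  psi q a x 1 = a.
Proof.
move=> q0 ha; rewrite /psi (@powz_nat _ _ _ 1) // divz_small ?expg0 ?expg1 ?mulg1 //.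
rewrite /absz; apply/andP; split=> //; lia.
Qed.

Lemma psiQ (gT : finGroupType) q (a x : gT) : (0 < q)%N -> (a ^+ (2*q) = 1)%g ->
  psi q a x (2 * q)%N = x.
Proof.
move=> q0 ha; rewrite /psi (@powz_nat _ _ _ (2 * q)) // ha divzz.
have -> : ((2 * q)%N%:Z != 0) by rewrite eqz_nat -lt0n muln_gt0 q0.
by rewrite expg1 mul1g.
Qed.


Notation Pt q := ('Z_(2 * q) * bool)%type.

Definition fA q (p : Pt q) : Pt q := (if p.2 then p.1 - 1 else p.1 + 1, p.2).
Definition fX q (p : Pt q) : Pt q :=
  if p.2 then (p.1 + q%:R, false) else (p.1, true).

Lemma fA_inj q : injective (@fA q).
Proof.
move=> [i b] [j c] e; move: (congr1 snd e) (congr1 fst e) => /= {e} <- h; case: b h => h; congr (_, _);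
  [exact: (addIr (-1)) h | exact: (addIr 1) h].
Qed.

Lemma fX_inj q : injective (@fX q).
Proof.
move=> [i b] [j c]; rewrite /fX /=; case: b; case: c => //=.
  by move=> /(congr1 fst) /= /addIr ->.
by move=> /(congr1 fst) /= ->.
Qed.

Definition pA q : {perm Pt q} := perm (@fA_inj q).
Definition pX q : {perm Pt q} := perm (@fX_inj q).

Lemma iterA q k (p : Pt q) :
  iter k (@fA q) p = (if p.2 then p.1 - k%:R else p.1 + k%:R, p.2).
Proof.
case: p => i b; elim: k => [|k IH] /=; first by case: b; rewrite ?subr0 ?addr0.
rewrite IH /fA /=; case: b {IH}; congr (_, _); rewrite mulrSr; ring.
Qed.

Lemma ZQ0 q : (0 < q)%N -> ((2 * q)%:R : 'Z_(2 * q)) = 0.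
Proof.
move=> q0; apply: val_inj; rewrite /= val_Zp_nat ?modnn //.
lia.
Qed.

Lemma pA_ord q : (0 < q)%N -> (pA q ^+ (2 * q) = 1)%g.
Proof.
move=> q0; apply/permP => -[i b]; rewrite permX perm1.
have -> : iter (2 * q) (pA q) (i, b) = iter (2 * q) (@fA q) (i, b).
  by apply: eq_iter => p; rewrite permE.
by rewrite iterA /= ZQ0 // subr0 addr0; case: b.
Qed.

Lemma qq0 q : (0 < q)%N -> (q%:R + q%:R : 'Z_(2 * q)) = 0.
Proof. by move=> q0; rewrite -natrD addnn -mul2n ZQ0. Qed.

Lemma pX2 q : (0 < q)%N -> (pX q ^+ 2 = pA q ^+ q)%g.
Proof.
move=> q0; apply/permP => -[i b]; rewrite !permX.
have -> : iter q (pA q) (i, b) = iter q (@fA q) (i, b).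
  by apply: eq_iter => p; rewrite permE.
rewrite iterA /= !permE /fX /=; case: b => //=.
congr (_, _); rewrite -[RHS]addr0 -(qq0 q0); ring.
Qed.

Lemma pXA q : (pX q * pA q * (pX q)^-1 = (pA q)^-1)%g.
Proof.
have h : (pA q * pX q * pA q = pX q)%g.
  apply/permP => -[i b]; rewrite !permM !permE /fA /fX /=; case: b => /=;
  congr (_, _); ring.
apply: (mulgI (pA q)); rewrite mulgV !mulgA h mulgV //.
Qed.

Lemma psi_pt q m : (0 < q)%N -> inS q m ->
  (psi q (pA q) (pX q) m) (0, false) =
  ((`|(m %% (2 * q)%N)%Z|%N)%:R, (m %/ (2 * q)%N)%Z == 1).
Proof.
move=> q0 Sm; rewrite /psi /powz permM !permX.
have -> : forall k, iter k (pA q) (0, false) = iter k (@fA q) (0, false).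
  by move=> k; apply: eq_iter => p; rewrite permE.
rewrite iterA /= add0r.
by case: (half_cases q0 Sm) => [[-> _]|[-> _]] /=; rewrite ?permE.
Qed.

Lemma psi_inj q m n : (0 < q)%N -> inS q m -> inS q n ->
  psi q (pA q) (pX q) m = psi q (pA q) (pX q) n -> m = n.
Proof.
move=> q0 Sm Sn e; have := congr1 (fun s : {perm Pt q} => s (0, false)) e.
rewrite /= !psi_pt // => -[e1 e2].
have Q1 : (1 < 2 * q)%N by lia.
have Qn : ((2 * q)%N%:Z != 0) by rewrite eqz_nat -lt0n muln_gt0 q0.
have bnd z : (`|(z %% (2*q)%N)%Z|%N < 2 * q)%N.
  have := ltz_pmod z (_ : (0 < (2*q)%N%:Z)); rewrite ltz_nat muln_gt0 q0 => /(_ isT).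
  have := modz_ge0 z Qn; case: (z %% _)%Z => // r _ /=; rewrite ltz_nat.
have hm : (m %% (2*q)%N)%Z = (n %% (2*q)%N)%Z.
  have := congr1 (@nat_of_ord _) e1; rewrite !val_Zp_nat // !modn_small ?bnd // => h.
  rewrite -(@gez0_abs (m %% _)%Z) ?modz_ge0 // h gez0_abs ?modz_ge0 //.
have hd : (m %/ (2*q)%N)%Z = (n %/ (2*q)%N)%Z.
  case: (half_cases q0 Sm) => [[h1 _]|[h1 _]];
  case: (half_cases q0 Sn) => [[h2 _]|[h2 _]]; by rewrite h1 h2 // in e2 *.
by rewrite (divz_eq m (2*q)%N) (divz_eq n (2*q)%N) hm hd.
Qed.

Theorem mainTheorem6 (q : nat) (hq : (0 < q)%N) :
  (* group axioms for (S, g_p) *)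
  (forall m n, inS q m -> inS q n -> inS q (gp q m n)) /\
  (forall m n k, inS q m -> inS q n -> inS q k ->
     gp q (gp q m n) k = gp q m (gp q n k)) /\
  (exists e, inS q e /\
     (forall m, inS q m -> gp q e m = m /\ gp q m e = m) /\
     (forall m, inS q m -> exists m', inS q m' /\ gp q m m' = e /\ gp q m' m = e)) /\
  (* isomorphism with the dicyclic group Q_{4q} = <a, x | a^{2q}=1, x^2=a^q, x a x^-1 = a^-1> *)
  (exists (gT : finGroupType) (G : {group gT}) (phi : int -> gT),
     (G \isog Grp (a : x : (a ^+ (2 * q) = 1, x ^+ 2 = a ^+ q, x * a * x^-1 = a^-1)))%g /\
     (forall m, inS q m -> phi m \in G) /\
     (forall y, y \in G -> exists2 m, inS q m & phi m = y) /\
     (forall m n, inS q m -> inS q n -> phi m = phi n -> m = n) /\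
     (forall m n, inS q m -> inS q n -> phi (gp q m n) = (phi m * phi n)%g)) /\
  (* nonabelian for q >= 2 *)
  ((2 <= q)%N -> exists m n, inS q m /\ inS q n /\ gp q m n <> gp q n m).
Proof.
pose A := pA q; pose X := pX q; pose phi := psi q A X.
have hA : (A ^+ (2 * q) = 1)%g := pA_ord hq.
have hX2 : (X ^+ 2 = A ^+ q)%g := pX2 hq.
have hXA : (X * A * X^-1 = A^-1)%g := pXA q.
have phiM m n : inS q m -> inS q n -> phi (gp q m n) = (phi m * phi n)%g.
  exact: psiM.
have phiI m n : inS q m -> inS q n -> phi m = phi n -> m = n.
  exact: psi_inj.
have gpS m n : inS q m -> inS q n -> inS q (gp q m n) by exact: gp_inS.
have S0 : inS q 0 by rewrite /inS lexx /= ltz_nat muln_gt0 hq.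
have phi0 : phi 0 = 1%g by exact: psi0.
pose G := (<[A]> <*> <[X]>)%G.
have AG : A \in G by rewrite (subsetP (joing_subl _ _)) ?cycle_id.
have XG : X \in G by rewrite (subsetP (joing_subr _ _)) ?cycle_id.
have phiG m : phi m \in G by rewrite groupM ?groupX.
have memS m : inS q m -> exists t : 'I_(4 * q), m = Posz t.
  move=> /andP[m0 m1]; have hm : (`|m| < 4 * q)%N by lia.
  by exists (Ordinal hm); rewrite /= gez0_abs.
have surj y : y \in G -> exists2 m, inS q m & phi m = y.
  pose Img := [set phi (Posz (nat_of_ord t)) | t : 'I_(4 * q)].
  have memImg m : inS q m -> phi m \in Img.
    by move=> /memS[t ->]; apply/imsetP; exists t.
  have ImgP z : z \in Img -> exists2 m, inS q m & phi m = z.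
    case/imsetP => t _ ->; exists (Posz t) => //.
    by rewrite /inS /= ltz_nat ltn_ord.
  have gsI : group_set Img.
    apply/group_setP; split; first by rewrite -phi0 memImg.
    move=> z w /ImgP[m Sm <-] /ImgP[n Sn <-].
    by rewrite -phiM // memImg //; apply: (gpS).
  have : G \subset Group gsI.
    rewrite join_subG !cycle_subG /=.
    have -> : A = phi 1 by rewrite /phi psi1.
    have -> : X = phi (2 * q)%N by rewrite /phi psiQ.
    by rewrite !memImg // /inS /=; lia.
  by move=> /subsetP sGI /sGI /ImgP.
rewrite /phi in phiM phiI phi0 phiG surj *.
split; first exact: gpS.
split.
  move=> m n k Sm Sn Sk; apply: phiI; try by repeat apply: (gpS).
  rewrite !phiM; try by repeat apply: (gpS).
  by rewrite [RHS]mulgA.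
split.
  exists 0; split=> //; split.
    move=> m Sm; split; apply: phiI; try by repeat apply: (gpS).
      by rewrite (phiM 0 m) // phi0 mul1g.
    by rewrite (phiM m 0) // phi0 mulg1.
  move=> m Sm; have [m' Sm' hm'] := surj _ (groupVr (phiG m)).
  exists m'; split=> //; split; apply: phiI; try by repeat apply: (gpS).
    by rewrite (phiM m m') // phi0 hm' mulgV.
  by rewrite (phiM m' m) // phi0 hm' mulVg.
split.
  exists _, G, phi; split; last by split=> // m _; exact: phiG.
  apply: intro_isoGrp.
    by apply/existsP; exists (A, X); rewrite /= !xpair_eqE eqxx hA hX2 hXA !eqxx.
  move=> rT H; case/existsP => -[a' x'] /= /eqP [defH ha' hx2' hxa'].
  pose inv (g : {perm Pt q}) : int :=
    if [pick t : 'I_(4 * q) | psi q A X (Posz t) == g] is Some t then Posz t else 0.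
  have invP m : inS q m -> inv (psi q A X m) = m.
    move=> Sm; rewrite /inv; case: pickP => [t /eqP ht|].
      apply: (phiI _ _ _ Sm ht).
      by rewrite /inS /= ltz_nat ltn_ord.
    by have [t ->] := memS m Sm; move/(_ t); rewrite eqxx.
  pose f g := psi q a' x' (inv g).
  have fM : morphic G f.
    apply/morphicP => g h /surj[m Sm <-] /surj[n Sn <-].
    rewrite /f -phiM // !invP //; last by apply: (gpS).
    exact: psiM.
  apply/homgP; exists (morphm_morphism fM).
  have fA : f A = a'.
    have -> : A = psi q A X 1 by rewrite psi1.
    by rewrite /f invP ?psi1 // /inS /=; lia.
  have fX : f X = x'.
    have -> : X = psi q A X (2 * q)%N by rewrite psiQ.
    by rewrite /f invP ?psiQ // /inS /=; lia.
  apply/eqP; rewrite eqEsubset; apply/andP; split.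
    rewrite morphimEdom; apply/subsetP => _ /imsetP[g _ ->].
    rewrite /= morphmE /f /psi -defH groupM // groupX //.
      by rewrite (subsetP (joing_subl _ _)) ?cycle_id.
    by rewrite (subsetP (joing_subr _ _)) ?cycle_id.
  rewrite -defH join_subG !cycle_subG.
  by rewrite -{1}fA -fX !(@mem_morphim _ _ _ (morphm_morphism fM)).
move=> q2; exists 1, (2 * q)%N%:Z.
have S1 : inS q 1 by rewrite /inS /=; lia.
have SQ : inS q (2 * q)%N%:Z by rewrite /inS /=; lia.
split=> //; split=> // e.
have := congr1 phi e; rewrite /phi (phiM 1 _) // (phiM _ 1) // psi1 // psiQ // => hc.
have hAA : (A * A = 1)%g.
  move: hXA; rewrite -hc mulgK => hAi.
  by rewrite {2}hAi mulgV.
have := congr1 (fun s : {perm Pt q} => s (0, false)) hAA.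
rewrite /= permM !permE /fA /= => /(congr1 fst) /= h2.
have : ((2%N)%:R : 'Z_(2 * q)) = 0 by rewrite -h2 add0r -(natrD _ 1 1).
move/(congr1 (@nat_of_ord _)); rewrite val_Zp_nat; last by lia.
by rewrite modn_small //; lia.
Qed.
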